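(* For every integer $n\ge 2$, $$\operatorname{op}_{n,n-1}(123) = (n-1)\,\operatorname{op}_{[2,\underbrace{1,\dots,1}_{n-2}]}(123).$$
   Context: An ordered set partition of $[N]$ into $k$ blocks is a sequence $B_1/B_2/\cdots/B_k$ of nonempty, pairwise disjoint subsets of $[N]$ whose union is $[N]$; the order of the blocks matters, but not the order of elements within a block. For a permutation $\rho=\rho_1\cdots\rho_m\in\mathcal{S}_m$, an ordered partition $B_1/\cdots/B_k$ contains $\rho$ if there are block indices $i_1<i_2<\cdots<i_m$ and elements $b_j\in B_{i_j}$ such that $b_1\cdots b_m$ is order-isomorphic to $\rho$; otherwise it avoids $\rho$. $\operatorname{op}_{n,k}(\rho)$ is the number of $\rho$-avoiding ordered partitions of $[n]$ into $k$ blocks, and for positive integers $b_1,\dots,b_k$, $\operatorname{op}_{[b_1,\dots,b_k]}(\rho)$ is the number of $\rho$-avoiding ordered partitions $B_1/\cdots/B_k$ of $[b_1+\cdots+b_k]$ with $|B_i|=b_i$ for all $i$. *)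

(* Defs.v *)
From mathcomp Require Import all_boot all_fingroup.
Set Implicit Arguments.
Unset Strict Implicit.
Unset Printing Implicit Defensive.

(* [N] is modelled by 'I_N = {0,...,N-1} (only the order matters).
   An ordered set partition B_1/.../B_k of [N] into k blocks is a
   k-indexed family of subsets B : {ffun 'I_k -> {set 'I_N}}. *)
Definition is_osp (N k : nat) (B : {ffun 'I_k -> {set 'I_N}}) : bool :=
  [&& [forall i, B i != set0],
      [forall i, forall j, (i != j) ==> [disjoint B i & B j]] &
      (\bigcup_(i < k) B i == [set: 'I_N])].

Definition osp_contains (N k m : nat) (B : {ffun 'I_k -> {set 'I_N}})
  (rho : {perm 'I_m}) : bool :=
  [exists idx : {ffun 'I_m -> 'I_k}, exists b : {ffun 'I_m -> 'I_N},
    [&& [forall j : 'I_m, forall j' : 'I_m, (j < j') ==> (idx j < idx j')],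
        [forall j : 'I_m, b j \in B (idx j)] &
        [forall j : 'I_m, forall j' : 'I_m,
           (b j < b j') == (rho j < rho j')]]].

Definition osp_avoids (N k m : nat) (B : {ffun 'I_k -> {set 'I_N}})
  (rho : {perm 'I_m}) : bool := ~~ osp_contains B rho.

Definition op (n k m : nat) (rho : {perm 'I_m}) : nat :=
  #|[set B : {ffun 'I_k -> {set 'I_n}} | is_osp B && osp_avoids B rho]|.

Definition op_sizes (bs : seq nat) (m : nat) (rho : {perm 'I_m}) : nat :=
  #|[set B : {ffun 'I_(size bs) -> {set 'I_(sumn bs)}} |
      [&& is_osp B, osp_avoids B rho &
          [forall i : 'I_(size bs), #|B i| == nth 0 bs i]]]|.

Definition p123 : {perm 'I_3} := 1%g.

(* Main.v *)
Require Import Defs.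
From mathcomp Require Import all_boot all_fingroup.
From mathcomp Require Import zify.
Set Implicit Arguments. Unset Strict Implicit. Unset Printing Implicit Defensive.

Lemma disjP (T : finType) (A B : {set T}) :
  reflect (forall x, x \in A -> x \in B -> False) [disjoint A & B].
Proof.
apply: (iffP idP) => [H x xA xB|H]; first by rewrite (disjointFr H xA) in xB.
rewrite -setI_eq0; apply/eqP/setP => x; rewrite !inE.
by case xA: (x \in A); case xB: (x \in B) => //; case: (H x).
Qed.

Lemma ospP k N (B : {ffun 'I_k -> {set 'I_N}}) :
  is_osp B <-> [/\ forall i, B i != set0,
     forall i j x, x \in B i -> x \in B j -> i = j &
     forall x, exists i, x \in B i].
Proof.
split.
- case/and3P => /forallP H1 /forallP H2 /eqP H3; split => //.
  + move=> i j x xi xj; apply/eqP/negPn/negP => ne.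
    by move: (H2 i) => /forallP/(_ j)/implyP/(_ ne)/disjP/(_ x xi xj).
  + move=> x; have : x \in [set: 'I_N] by rewrite inE.
    by rewrite -H3 => /bigcupP [i _ xi]; exists i.
- case=> H1 H2 H3; apply/and3P; split.
  + by apply/forallP.
  + apply/forallP => i; apply/forallP => j; apply/implyP => ne.
    apply/disjP => x xi xj; by move: (H2 _ _ _ xi xj) => e; rewrite e eqxx in ne.
  + rewrite eqEsubset subsetT /=; apply/subsetP => x _.
    by case: (H3 x) => i xi; apply/bigcupP; exists i.
Qed.

Definition cont3 k N (B : {ffun 'I_k -> {set 'I_N}}) :=
  exists i1 i2 i3 : 'I_k, exists b1 b2 b3 : 'I_N,
    [/\ i1 < i2, i2 < i3, b1 < b2, b2 < b3 &
        [/\ b1 \in B i1, b2 \in B i2 & b3 \in B i3]].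

Lemma contP k N (B : {ffun 'I_k -> {set 'I_N}}) :
  osp_contains B p123 <-> cont3 B.
Proof.
pose o0 : 'I_3 := @Ordinal 3 0 isT.
pose o1 : 'I_3 := @Ordinal 3 1 isT.
pose o2 : 'I_3 := @Ordinal 3 2 isT.
split.
- case/existsP => idx /existsP [b /and3P [/forallP Hi /forallP Hb /forallP Hv]].
  exists (idx o0), (idx o1), (idx o2), (b o0), (b o1), (b o2); split.
  + by move: (Hi o0) => /forallP/(_ o1)/implyP; apply.
  + by move: (Hi o1) => /forallP/(_ o2)/implyP; apply.
  + by move: (Hv o0) => /forallP/(_ o1)/eqP; rewrite /p123 !perm1 => ->.
  + by move: (Hv o1) => /forallP/(_ o2)/eqP; rewrite /p123 !perm1 => ->.
  + by split; apply: Hb.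
- case=> i1 [i2 [i3 [b1 [b2 [b3 [l1 l2 l3 l4 [m1 m2 m3]]]]]]].
  apply/existsP; exists [ffun j : 'I_3 => if val j == 0 then i1 else if val j == 1 then i2 else i3].
  apply/existsP; exists [ffun j : 'I_3 => if val j == 0 then b1 else if val j == 1 then b2 else b3].
  apply/and3P; split.
  + apply/forallP => -[[|[|[|j]]] Hj] //; apply/forallP => -[[|[|[|j']]] Hj'] //;
      rewrite !ffunE /= ?l1 ?l2 //; lia.
  + by apply/forallP => -[[|[|[|j]]] Hj] //; rewrite !ffunE.
  + apply/forallP => -[[|[|[|j]]] Hj] //; apply/forallP => -[[|[|[|j']]] Hj'] //;
      rewrite !ffunE /p123 !perm1 /=; rewrite ?l1 ?l2 ?l3 ?l4 //; apply/eqP; lia.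
Qed.

Lemma transfer k N (B B' : {ffun 'I_k -> {set 'I_N}}) (j0 j1 : 'I_k) :
  nat_of_ord j1 = (nat_of_ord j0).+1 ->
  (forall l, l != j0 -> l != j1 -> B' l = B l) ->
  B' j0 :|: B' j1 = B j0 :|: B j1 ->
  (forall u v, u \in B' j0 -> v \in B' j1 -> u < v ->
     exists u' v', [/\ u' \in B j0, v' \in B j1, u' < v', u <= u' & v' <= v]) ->
  cont3 B' -> cont3 B.
Proof.
move=> Hj Hout HU Hpair.
have help : forall i b, b \in B' i -> exists i', b \in B i' /\
   ((nat_of_ord i <> nat_of_ord j0 /\ nat_of_ord i <> nat_of_ord j1 /\ nat_of_ord i' = nat_of_ord i) \/
    ((nat_of_ord i = nat_of_ord j0 \/ nat_of_ord i = nat_of_ord j1) /\ (nat_of_ord i' = nat_of_ord j0 \/ nat_of_ord i' = nat_of_ord j1))).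
  move=> i b bi.
  have inU : i = j0 \/ i = j1 -> b \in B j0 :|: B j1.
    by case=> ei; rewrite -HU inE -ei bi ?orbT.
  case: (eqVneq i j0) => [e0|n0].
    have := inU (or_introl e0); rewrite inE => /orP [h|h].
      by exists j0; split => //; right; subst i; split; left.
    by exists j1; split => //; right; subst i; split; [left|right].
  case: (eqVneq i j1) => [e1|n1].
    have := inU (or_intror e1); rewrite inE => /orP [h|h].
      by exists j0; split => //; right; subst i; split; [right|left].
    by exists j1; split => //; right; subst i; split; right.
  exists i; split; first by rewrite -Hout.
  left; split; last split => //.
  - by move=> e; move/eqP: n0; apply; apply: val_inj.
  - by move=> e; move/eqP: n1; apply; apply: val_inj.
case=> i1 [i2 [i3 [b1 [b2 [b3 [l1 l2 l3 l4 [m1 m2 m3]]]]]]].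
have nout : forall i : 'I_k, nat_of_ord i <> nat_of_ord j0 -> nat_of_ord i <> nat_of_ord j1 -> B' i = B i.
  move=> i h0 h1; apply: Hout; apply/negP => /eqP e; subst i; [exact: h0|exact: h1].
case: (boolP ((nat_of_ord i1 == nat_of_ord j0) && (nat_of_ord i2 == nat_of_ord j1))) => [/andP [/eqP e1 /eqP e2]|c1].
  have e1' : i1 = j0 by apply: val_inj.
  have e2' : i2 = j1 by apply: val_inj.
  subst i1 i2.
  have [u' [v' [u1 v1 uv uu vv]]] := Hpair _ _ m1 m2 l3.
  exists j0, j1, i3, u', v', b3; split => //; try lia.
  by rewrite -(nout i3) //; lia.
case: (boolP ((nat_of_ord i2 == nat_of_ord j0) && (nat_of_ord i3 == nat_of_ord j1))) => [/andP [/eqP e1 /eqP e2]|c2].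
  have e1' : i2 = j0 by apply: val_inj.
  have e2' : i3 = j1 by apply: val_inj.
  subst i2 i3.
  have [u' [v' [u1 v1 uv uu vv]]] := Hpair _ _ m2 m3 l4.
  exists i1, j0, j1, b1, u', v'; split => //; try lia.
  by rewrite -(nout i1) //; lia.
have [i1' [h1 o1]] := help _ _ m1.
have [i2' [h2 o2]] := help _ _ m2.
have [i3' [h3 o3]] := help _ _ m3.
exists i1', i2', i3', b1, b2, b3; split => //; lia.
Qed.

Definition rk N (U : {set 'I_N}) (u : 'I_N) := #|[set v in U | v < u]|.

Lemma rk_lt N (U : {set 'I_N}) u : u \in U -> rk U u < #|U|.
Proof.
move=> uU; apply: proper_card; apply/properP; split.
  by apply/subsetP => v; rewrite inE => /andP [].
by exists u => //; rewrite inE ltnn andbF.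
Qed.

Lemma rk_mono N (U : {set 'I_N}) (u v : 'I_N) : u \in U -> u < v -> rk U u < rk U v.
Proof.
move=> uU uv; apply: proper_card; apply/properP; split.
  apply/subsetP => w; rewrite !inE => /andP [-> wu] /=; exact: ltn_trans wu uv.
by exists u; rewrite !inE ?uU ?uv // ltnn andbF.
Qed.

Lemma rk_inj N (U : {set 'I_N}) (u v : 'I_N) : u \in U -> v \in U -> rk U u = rk U v -> u = v.
Proof.
move=> uU vU e; case: (ltngtP u v) => [h|h|h]; last exact: val_inj.
- by have := rk_mono uU h; rewrite e ltnn.
- by have := rk_mono vU h; rewrite e ltnn.
Qed.

Lemma rk_ltE N (U : {set 'I_N}) (u v : 'I_N) : u \in U -> v \in U -> (u < v) = (rk U u < rk U v).
Proof.
move=> uU vU; case: (ltngtP u v) => h.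
- by rewrite (rk_mono uU h).
- by have := rk_mono vU h => /ltnW; rewrite leqNgt => /negbTE ->.
- have e : u = v by apply: val_inj.
  by rewrite e ltnn.
Qed.

Lemma rk_leE N (U : {set 'I_N}) (u v : 'I_N) : u \in U -> v \in U -> (u <= v) = (rk U u <= rk U v).
Proof. by move=> uU vU; rewrite leqNgt (rk_ltE vU uU) -leqNgt. Qed.

Lemma rk_ex N (U : {set 'I_N}) r : #|U| = 3 -> r < 3 -> exists2 u, u \in U & rk U u = r.
Proof.
move=> c3 r3.
pose f := fun u => (inord (rk U u) : 'I_3).
have finj : {in U &, injective f}.
  move=> u v uU vU /(congr1 (@nat_of_ord 3)); rewrite /f !inordK; last 2 first.
  - by rewrite -c3 rk_lt.
  - by rewrite -c3 rk_lt.
  exact: rk_inj.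
have : f @: U == [set: 'I_3].
  by rewrite eqEcard subsetT /= card_in_imset // c3 cardsT card_ord.
move/eqP => e.
have : (inord r : 'I_3) \in f @: U by rewrite e inE.
case/imsetP => u uU /(congr1 (@nat_of_ord 3)); rewrite /f !inordK //; last by rewrite -c3 rk_lt.
by move=> ->; exists u.
Qed.

Definition upd k N (B : {ffun 'I_k -> {set 'I_N}}) (j0 j1 : 'I_k) (X Y : {set 'I_N}) :
  {ffun 'I_k -> {set 'I_N}} :=
  [ffun l => if l == j0 then X else if l == j1 then Y else B l].

Lemma upd_osp k N (B : {ffun 'I_k -> {set 'I_N}}) (j0 j1 : 'I_k) X Y :
  is_osp B -> j0 != j1 -> X :|: Y = B j0 :|: B j1 -> [disjoint X & Y] ->
  X != set0 -> Y != set0 -> is_osp (upd B j0 j1 X Y).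
Proof.
move=> /ospP [H1 H2 H3] n01 HU dXY nX nY; apply/ospP; split.
- by move=> i; rewrite ffunE; case: (i == j0) => //; case: (i == j1).
- have inU : forall x, x \in X :|: Y -> x \in B j0 \/ x \in B j1.
    by move=> x; rewrite HU inE => /orP [] ?; [left|right].
  have XU : forall x, x \in X -> x \in B j0 \/ x \in B j1.
    by move=> x xX; apply: inU; rewrite inE xX.
  have YU : forall x, x \in Y -> x \in B j0 \/ x \in B j1.
    by move=> x xY; apply: inU; rewrite inE xY orbT.
  have n10 : j1 != j0 by rewrite eq_sym.
  have memU : forall l x, x \in upd B j0 j1 X Y l -> (l == j0) || (l == j1) ->
      x \in B j0 \/ x \in B j1.
    move=> l x; rewrite ffunE; case: (l == j0) => /=; first by move=> h _; exact: XU.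
    by case: (l == j1) => //= h _; exact: YU.
  have memO : forall l x, x \in upd B j0 j1 X Y l -> ~~ ((l == j0) || (l == j1)) ->
      x \in B l.
    by move=> l x; rewrite ffunE; case: (l == j0); case: (l == j1).
  have XYc : forall i j x, i == j0 -> j == j1 -> x \in upd B j0 j1 X Y i ->
      x \in upd B j0 j1 X Y j -> False.
    move=> i j x /eqP -> /eqP ->; rewrite !ffunE eqxx (negbTE n10) eqxx.
    exact: disjP _ _ dXY x.
  move=> i j x xi xj.
  case: (boolP ((i == j0) || (i == j1))) => ci; case: (boolP ((j == j0) || (j == j1))) => cj.
  + case/orP: ci => /eqP ei; case/orP: cj => /eqP ej; subst; rewrite //.
    * by case: (XYc j0 j1 x (eqxx _) (eqxx _) xi xj).
    * by case: (XYc j0 j1 x (eqxx _) (eqxx _) xj xi).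
  + have h2 := memO _ _ xj cj.
    by case: (memU _ _ xi ci) => h; move: (H2 _ _ _ h h2) cj => <-; rewrite eqxx ?orbT.
  + have h2 := memO _ _ xi ci.
    by case: (memU _ _ xj cj) => h; move: (H2 _ _ _ h h2) ci => <-; rewrite eqxx ?orbT.
  + exact: H2 _ _ _ (memO _ _ xi ci) (memO _ _ xj cj).
- have n10 : j1 != j0 by rewrite eq_sym.
  move=> x; case: (H3 x) => l xl.
  case: (boolP ((l == j0) || (l == j1))) => cl.
    have : x \in X :|: Y by rewrite HU inE; case/orP: cl => /eqP <-; rewrite xl ?orbT.
    rewrite inE => /orP [h|h]; [exists j0|exists j1]; rewrite ffunE ?eqxx //.
    by rewrite (negbTE n10).
  exists l; rewrite ffunE; move: cl; case: (l == j0) => //; case: (l == j1) => //.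
Qed.

Definition Fm k N (j0 j1 : 'I_k) (B : {ffun 'I_k -> {set 'I_N}}) :=
  let U := B j0 :|: B j1 in
  if [pick c in B j1] is Some c then
    if [pick p in U | rk U p == (rk U c + 2) %% 3] is Some p
    then upd B j0 j1 [set p] (U :\ p) else B
  else B.

Definition Gm k N (j0 j1 : 'I_k) (B : {ffun 'I_k -> {set 'I_N}}) :=
  let U := B j0 :|: B j1 in
  if [pick p in B j0] is Some p then
    if [pick c in U | rk U c == (rk U p + 1) %% 3] is Some c
    then upd B j0 j1 (U :\ c) [set c] else B
  else B.

Lemma card3 N (A C : {set 'I_N}) a c : [disjoint A & C] -> #|A| = a -> #|C| = c ->
  #|A :|: C| = a + c.
Proof.
move=> d <- <-; rewrite cardsU.
have -> : A :&: C = set0 by apply/eqP; rewrite setI_eq0.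
by rewrite cards0 subn0.
Qed.

Lemma FmE k N (j0 j1 : 'I_k) (B : {ffun 'I_k -> {set 'I_N}}) :
  [disjoint B j0 & B j1] -> #|B j0| = 2 -> #|B j1| = 1 ->
  let U := B j0 :|: B j1 in
  exists c p, [/\ B j1 = [set c], p \in U, #|U| = 3,
     rk U p = (rk U c + 2) %% 3 & Fm j0 j1 B = upd B j0 j1 [set p] (U :\ p)].
Proof.
move=> d c2 c1 U.
have U3 : #|U| = 3 by rewrite /U (card3 d c2 c1).
have /cards1P [c ec] : #|B j1| == 1 by rewrite c1.
have cU : c \in U by rewrite /U ec !inE eqxx orbT.
have [p pU rp] := @rk_ex _ U ((rk U c + 2) %% 3) U3 (ltn_pmod _ (isT : 0 < 3)).
exists c, p; split => //.
rewrite /Fm -/U.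
case: pickP => [c' c'in|]; last by move/(_ c); rewrite ec set11.
have -> : c' = c by move: c'in; rewrite ec inE => /eqP.
case: pickP => [p' /andP [p'U /eqP rp']|]; last by move/(_ p); rewrite pU rp eqxx.
have -> // : p' = p by apply: (rk_inj p'U pU); rewrite rp rp'.
Qed.

Lemma GmE k N (j0 j1 : 'I_k) (B : {ffun 'I_k -> {set 'I_N}}) :
  [disjoint B j0 & B j1] -> #|B j0| = 1 -> #|B j1| = 2 ->
  let U := B j0 :|: B j1 in
  exists p c, [/\ B j0 = [set p], c \in U, #|U| = 3,
     rk U c = (rk U p + 1) %% 3 & Gm j0 j1 B = upd B j0 j1 (U :\ c) [set c]].
Proof.
move=> d c1 c2 U.
have U3 : #|U| = 3 by rewrite /U (card3 d c1 c2).
have /cards1P [p ep] : #|B j0| == 1 by rewrite c1.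
have pU : p \in U by rewrite /U ep !inE eqxx.
have [c cU rc] := @rk_ex _ U ((rk U p + 1) %% 3) U3 (ltn_pmod _ (isT : 0 < 3)).
exists p, c; split => //.
rewrite /Gm -/U.
case: pickP => [p' p'in|]; last by move/(_ p); rewrite ep set11.
have -> : p' = p by move: p'in; rewrite ep inE => /eqP.
case: pickP => [c' /andP [c'U /eqP rc']|]; last by move/(_ c); rewrite cU rc eqxx.
have -> // : c' = c by apply: (rk_inj c'U cU); rewrite rc rc'.
Qed.

Definition Sz k N (j : 'I_k) (B : {ffun 'I_k -> {set 'I_N}}) :=
  [forall l, #|B l| == (if l == j then 2 else 1)].
Definition Sset k N (j : 'I_k) :=
  [set B : {ffun 'I_k -> {set 'I_N}} | [&& is_osp B, osp_avoids B p123 & Sz j B]].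

Lemma osp_disj k N (B : {ffun 'I_k -> {set 'I_N}}) (j0 j1 : 'I_k) :
  is_osp B -> j0 != j1 -> [disjoint B j0 & B j1].
Proof.
move=> /ospP [_ H _] n; apply/disjP => x x0 x1.
by move: (H _ _ _ x0 x1) n => ->; rewrite eqxx.
Qed.

Lemma Sset_facts k N (j0 j1 : 'I_k) (B : {ffun 'I_k -> {set 'I_N}}) :
  j0 != j1 -> is_osp B -> Sz j0 B ->
  [/\ [disjoint B j0 & B j1], #|B j0| = 2, #|B j1| = 1 &
      forall l, l != j0 -> #|B l| = 1].
Proof.
move=> n o /forallP sz; split.
- exact: osp_disj.
- by move/eqP: (sz j0); rewrite eqxx.
- by move/eqP: (sz j1); rewrite eq_sym (negbTE n).
- by move=> l nl; move/eqP: (sz l); rewrite (negbTE nl).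
Qed.

Lemma upd_j0 k N (B : {ffun 'I_k -> {set 'I_N}}) j0 j1 X Y : upd B j0 j1 X Y j0 = X.
Proof. by rewrite ffunE eqxx. Qed.
Lemma upd_j1 k N (B : {ffun 'I_k -> {set 'I_N}}) j0 j1 X Y :
  j0 != j1 -> upd B j0 j1 X Y j1 = Y.
Proof. by move=> n; rewrite ffunE eq_sym (negbTE n) eqxx. Qed.
Lemma upd_o k N (B : {ffun 'I_k -> {set 'I_N}}) j0 j1 X Y l :
  l != j0 -> l != j1 -> upd B j0 j1 X Y l = B l.
Proof. by move=> n0 n1; rewrite ffunE (negbTE n0) (negbTE n1). Qed.

Lemma F_in k N (j0 j1 : 'I_k) (B : {ffun 'I_k -> {set 'I_N}}) :
  nat_of_ord j1 = (nat_of_ord j0).+1 -> B \in Sset N j0 -> Fm j0 j1 B \in Sset N j1.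
Proof.
move=> Hj; rewrite !inE => /and3P [o a sz].
have n01 : j0 != j1 by apply/eqP => e; rewrite e in Hj; lia.
have [d s0 s1 so] := Sset_facts n01 o sz.
have [c [p [ec pU U3 rp ->]]] := FmE d s0 s1.
set U := B j0 :|: B j1 in pU U3 rp *.
have cU : c \in U by rewrite /U ec !inE eqxx orbT.
have rcl := rk_lt cU; have rpl := rk_lt pU; rewrite U3 in rcl rpl.
have U2 : #|U :\ p| = 2 by move: (cardsD1 p U); rewrite pU U3 => -[].
apply/and3P; split.
- apply: upd_osp => //.
  + by rewrite setD1K.
  + by apply/disjP => x; rewrite !inE => /eqP ->; rewrite eqxx.
  + by apply/set0Pn; exists p; rewrite set11.
  + by rewrite -card_gt0 U2.
- apply/negP => /contP cF; move/negP: a; apply; apply/contP.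
  apply: (transfer Hj _ _ _ cF).
  + by move=> l n0 n1; rewrite upd_o.
  + by rewrite upd_j0 upd_j1 // setD1K.
  + move=> u v; rewrite upd_j0 upd_j1 // in_set1 in_setD1 => /eqP -> /andP [vp vU] pv.
    have rvl := rk_lt vU; rewrite U3 in rvl.
    have rpv : rk U p < rk U v by rewrite -rk_ltE.
    have pc : p != c by apply/eqP => e; rewrite e in rp; lia.
    exists p, c; split.
    * by move: pU; rewrite /U ec !inE (negbTE pc) orbF.
    * by rewrite ec set11.
    * by rewrite (rk_ltE pU cU) //; lia.
    * by [].
    * by rewrite (rk_leE cU vU) //; lia.
- apply/forallP => l.
  case: (eqVneq l j0) => [->|n0]; first by rewrite upd_j0 cards1 eq_sym (negbTE n01).
  case: (eqVneq l j1) => [->|n1]; first by rewrite upd_j1 // U2 eqxx.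
  by rewrite upd_o // so // (negbTE n1).
Qed.

Lemma G_in k N (j0 j1 : 'I_k) (B : {ffun 'I_k -> {set 'I_N}}) :
  nat_of_ord j1 = (nat_of_ord j0).+1 -> B \in Sset N j1 -> Gm j0 j1 B \in Sset N j0.
Proof.
move=> Hj; rewrite !inE => /and3P [o a sz].
have n01 : j0 != j1 by apply/eqP => e; rewrite e in Hj; lia.
have n10 : j1 != j0 by rewrite eq_sym.
have [d s1 s0 so] := Sset_facts n10 o sz.
rewrite disjoint_sym in d.
have [p [c [ep cU U3 rc ->]]] := GmE d s0 s1.
set U := B j0 :|: B j1 in cU U3 rc *.
have pU : p \in U by rewrite /U ep !inE eqxx.
have rcl := rk_lt cU; have rpl := rk_lt pU; rewrite U3 in rcl rpl.
have U2 : #|U :\ c| = 2 by move: (cardsD1 c U); rewrite cU U3 => -[].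
apply/and3P; split.
- apply: upd_osp => //.
  + by rewrite setUC setD1K.
  + by apply/disjP => x; rewrite !inE => /andP [/negbTE ->].
  + by rewrite -card_gt0 U2.
  + by apply/set0Pn; exists c; rewrite set11.
- apply/negP => /contP cF; move/negP: a; apply; apply/contP.
  apply: (transfer Hj _ _ _ cF).
  + by move=> l n0 n1; rewrite upd_o.
  + by rewrite upd_j0 upd_j1 // setUC setD1K.
  + move=> u v; rewrite upd_j0 upd_j1 // in_set1 in_setD1 => /andP [uc uU] /eqP -> uv.
    have rul := rk_lt uU; rewrite U3 in rul.
    have ruc : rk U u < rk U c by rewrite -rk_ltE.
    have pc : p != c by apply/eqP => e; rewrite e in rc; lia.
    exists p, c; split.
    * by rewrite ep set11.
    * by move: cU; rewrite /U ep !inE eq_sym (negbTE pc).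
    * by rewrite (rk_ltE pU cU) //; lia.
    * by rewrite (rk_leE uU pU) //; lia.
    * by [].
- apply/forallP => l.
  case: (eqVneq l j0) => [->|n0]; first by rewrite upd_j0 U2 eqxx.
  case: (eqVneq l j1) => [->|n1]; first by rewrite upd_j1 // cards1.
  by rewrite upd_o // so // (negbTE n0).
Qed.

Lemma rem_eq N (A C : {set 'I_N}) c : [disjoint A & C] -> C = [set c] -> A = (A :|: C) :\ c.
Proof.
move=> d ec; have cC : c \in C by rewrite ec set11.
apply/setP => x; rewrite !inE ec in_set1.
case xA: (x \in A) => /=; last by case: (x == c).
have xc : x != c by apply/eqP => e; apply: (disjP _ _ d x xA); rewrite e.
by rewrite xc.
Qed.

Lemma mod3_inj d a b q : a < 3 -> b < 3 -> q = (a + d) %% 3 -> q = (b + d) %% 3 -> a = b.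
Proof.
move=> ha hb e1 e2; have : (a + d) %% 3 = (b + d) %% 3 by rewrite -e1 -e2.
move/eqP; rewrite eqn_modDr => /eqP; rewrite !modn_small //.
Qed.

Lemma F_inj k N (j0 j1 : 'I_k) :
  j0 != j1 -> {in Sset N j0 &, injective (Fm j0 j1)}.
Proof.
move=> n01 B1 B2; rewrite !inE => /and3P [o1 _ z1] /and3P [o2 _ z2].
have [d1 s01 s11 so1] := Sset_facts n01 o1 z1.
have [d2 s02 s12 so2] := Sset_facts n01 o2 z2.
have [c1 [p1 [ec1 pU1 U31 rp1 ->]]] := FmE d1 s01 s11.
have [c2 [p2 [ec2 pU2 U32 rp2 ->]]] := FmE d2 s02 s12.
move=> e.
have e0 := congr1 (fun B : {ffun 'I_k -> {set 'I_N}} => B j0) e; rewrite /= !upd_j0 in e0.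
have ep := set1_inj e0; subst p2.
have e1 := congr1 (fun B : {ffun 'I_k -> {set 'I_N}} => B j1) e; rewrite /= !upd_j1 // in e1.
have eU : B1 j0 :|: B1 j1 = B2 j0 :|: B2 j1 by rewrite -(setD1K pU1) -(setD1K pU2) e1.
rewrite eU in pU1 U31 rp1.
have cU1 : c1 \in B2 j0 :|: B2 j1 by rewrite -eU ec1 !inE eqxx orbT.
have cU2 : c2 \in B2 j0 :|: B2 j1 by rewrite ec2 !inE eqxx orbT.
have l1 := rk_lt cU1; have l2 := rk_lt cU2; rewrite U32 in l1 l2.
have ec : c1 = c2 by apply: (rk_inj cU1 cU2); apply: (mod3_inj l1 l2 rp1 rp2).
subst c2.
apply/ffunP => l.
case: (eqVneq l j0) => [->|n0].
  by rewrite (rem_eq d1 ec1) (rem_eq d2 ec2) eU.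
case: (eqVneq l j1) => [->|n1]; first by rewrite ec1 ec2.
have := congr1 (fun B : {ffun 'I_k -> {set 'I_N}} => B l) e; rewrite /= !upd_o //.
Qed.

Lemma G_inj k N (j0 j1 : 'I_k) :
  j0 != j1 -> {in Sset N j1 &, injective (Gm j0 j1)}.
Proof.
move=> n01 B1 B2; rewrite !inE => /and3P [o1 _ z1] /and3P [o2 _ z2].
have n10 : j1 != j0 by rewrite eq_sym.
have [d1 s11 s01 so1] := Sset_facts n10 o1 z1.
have [d2 s12 s02 so2] := Sset_facts n10 o2 z2.
rewrite disjoint_sym in d1; rewrite disjoint_sym in d2.
have [p1 [c1 [ep1 cU1 U31 rc1 ->]]] := GmE d1 s01 s11.
have [p2 [c2 [ep2 cU2 U32 rc2 ->]]] := GmE d2 s02 s12.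
move=> e.
have e1 := congr1 (fun B : {ffun 'I_k -> {set 'I_N}} => B j1) e; rewrite /= !upd_j1 // in e1.
have ec := set1_inj e1; subst c2.
have e0 := congr1 (fun B : {ffun 'I_k -> {set 'I_N}} => B j0) e; rewrite /= !upd_j0 in e0.
have eU : B1 j0 :|: B1 j1 = B2 j0 :|: B2 j1 by rewrite -(setD1K cU1) -(setD1K cU2) e0.
rewrite eU in cU1 U31 rc1.
have pU1 : p1 \in B2 j0 :|: B2 j1 by rewrite -eU ep1 !inE eqxx.
have pU2 : p2 \in B2 j0 :|: B2 j1 by rewrite ep2 !inE eqxx.
have l1 := rk_lt pU1; have l2 := rk_lt pU2; rewrite U32 in l1 l2.
have epp : p1 = p2 by apply: (rk_inj pU1 pU2); apply: (mod3_inj l1 l2 rc1 rc2).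
subst p2.
apply/ffunP => l.
case: (eqVneq l j0) => [->|n0]; first by rewrite ep1 ep2.
case: (eqVneq l j1) => [->|n1].
  rewrite disjoint_sym in d1; rewrite disjoint_sym in d2.
  by rewrite (rem_eq d1 ep1) (rem_eq d2 ep2) setUC eU setUC.
have := congr1 (fun B : {ffun 'I_k -> {set 'I_N}} => B l) e; rewrite /= !upd_o //.
Qed.

Lemma swap_card k N (j0 j1 : 'I_k) :
  nat_of_ord j1 = (nat_of_ord j0).+1 -> #|Sset N j0| = #|Sset N j1|.
Proof.
move=> Hj.
have n01 : j0 != j1 by apply/eqP => e; rewrite e in Hj; lia.
apply/eqP; rewrite eqn_leq; apply/andP; split.
- rewrite -(card_in_imset (F_inj (N:=N) n01)); apply: subset_leq_card.
  by apply/subsetP => x /imsetP [B BS ->]; exact: F_in.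
- rewrite -(card_in_imset (G_inj (N:=N) n01)); apply: subset_leq_card.
  by apply/subsetP => x /imsetP [B BS ->]; exact: G_in.
Qed.

Lemma all_eq k N (j : 'I_k.+1) : #|Sset N j| = #|Sset N (@ord0 k)|.
Proof.
have : forall m (j : 'I_k.+1), nat_of_ord j = m -> #|Sset N j| = #|Sset N (@ord0 k)|.
  elim=> [|m IH] j' e.
    by have -> : j' = ord0 by apply: val_inj.
  have hm : m < k.+1 by have := ltn_ord j'; lia.
  rewrite -(IH (Ordinal hm)) //; symmetry; apply: swap_card => /=; lia.
by move=> /(_ _ j erefl).
Qed.

Lemma card_sum N (A : {set 'I_N}) : #|A| = \sum_x (x \in A : nat).
Proof. by rewrite -sum1_card big_mkcond /=; apply: eq_bigr => x _; case: (x \in A). Qed.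

Lemma add1_pos t s : 0 < t -> t + s = 1 -> s = 0 /\ t = 1.
Proof. lia. Qed.
Lemma sz2 a : a - 1 = 1 -> a == 2.
Proof. lia. Qed.
Lemma sz1 a : a - 1 == 0 -> (0 < a) -> a == 1.
Proof. lia. Qed.

Lemma osp_sz k (B : {ffun 'I_k -> {set 'I_k.+1}}) : is_osp B -> exists j, Sz j B.
Proof.
move=> /ospP [H1 H2 H3].
have tot : \sum_l #|B l| = k.+1.
  under eq_bigr => l _ do rewrite card_sum.
  rewrite exchange_big /=.
  rewrite (eq_bigr (fun _ => 1)); first by rewrite sum_nat_const card_ord muln1.
  move=> x _; case: (H3 x) => l0 xl0.
  rewrite (bigD1 l0) //= xl0 big1 // => l nl.
  by case xl: (x \in B l) => //; move: (H2 _ _ _ xl xl0) nl => ->; rewrite eqxx.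
have ge1 : forall l, 0 < #|B l| by move=> l; rewrite card_gt0.
have tot1 : \sum_l (#|B l| - 1) = 1.
  have : \sum_l ((#|B l| - 1) + 1) = k.+1.
    by rewrite -[in RHS]tot; apply: eq_bigr => l _; rewrite subnK.
  rewrite big_split /= sum_nat_const card_ord muln1; move: (\sum_(i < k) (#|B i| - 1)) => s; lia.
have [j hj] : exists j, 0 < #|B j| - 1.
  case: (pickP (fun l => 0 < #|B l| - 1)) => [j hj|hn]; first by exists j.
  suff : \sum_l (#|B l| - 1) = 0 by rewrite tot1.
  by apply: big1 => l _; move: (hn l); case: (#|B l| - 1).
exists j.
move: tot1; rewrite (bigD1 j) //= => e.
have [s0 t1] := add1_pos hj e.
move/eqP: s0; rewrite sum_nat_eq0 => /forallP r0.
apply/forallP => l; case: (eqVneq l j) => [->|nl]; first exact: sz2.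
by move: (r0 l); rewrite nl /= => h; apply: sz1 h (ge1 l).
Qed.

Lemma card_sumT (T : finType) (A : {set T}) : #|A| = \sum_x (x \in A : nat).
Proof. by rewrite -sum1_card big_mkcond /=; apply: eq_bigr => x _; case: (x \in A). Qed.

Lemma Sz_uniq k N (B : {ffun 'I_k -> {set 'I_N}}) j j' : Sz j B -> Sz j' B -> j = j'.
Proof.
move=> /forallP h /forallP h'; apply/eqP; apply/negP => /negP n.
by move: (h j) (h' j); rewrite eqxx (negbTE n) => /eqP ->.
Qed.

Lemma op_sum k : op k.+1 k p123 = \sum_(j < k) #|Sset k.+1 j|.
Proof.
rewrite /op card_sumT.
under [RHS]eq_bigr => j _ do rewrite card_sumT.
rewrite [RHS]exchange_big /=; apply: eq_bigr => B _.
rewrite inE; case: (boolP (is_osp B && osp_avoids B p123)) => [/andP [o a]|h].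
- have [j0 hj] := osp_sz o.
  rewrite (bigD1 j0) //= inE o a hj big1 // => j nj; rewrite inE o a /=.
  by case hz: (Sz j B) => //; rewrite (Sz_uniq hz hj) eqxx in nj.
- rewrite big1 // => j _; rewrite inE.
  by case: (is_osp B) h => //=; case: (osp_avoids B p123).
Qed.

Lemma op_sizesE bs k N : size bs = k -> sumn bs = N ->
  op_sizes bs p123 = #|[set B : {ffun 'I_k -> {set 'I_N}} |
      [&& is_osp B, osp_avoids B p123 & [forall i : 'I_k, #|B i| == nth 0 bs i]]]|.
Proof. by move=> <- <-. Qed.

Theorem corollary1 (n : nat) : 2 <= n ->
  op n (n - 1) p123 = (n - 1) * op_sizes (2 :: nseq (n - 2) 1) p123.
Proof.
case: n => [|[|m]] // _.
have -> : m.+2 - 1 = m.+1 by [].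
rewrite (_ : m.+2 - 2 = m); last by rewrite !subSS subn0.
rewrite (@op_sizesE _ m.+1 m.+2); last 2 first.
- by rewrite /= size_nseq.
- by rewrite /= sumn_nseq mul1n add2n.
rewrite op_sum (eq_bigr (fun _ => #|Sset m.+2 (@ord0 m)|)); last by move=> j _; apply: all_eq.
rewrite sum_nat_const card_ord; congr (_ * _).
apply: eq_card => B; rewrite !inE; congr [&& _, _ & _].
apply: eq_forallb => l; congr (_ == _).
case: l => [[|l] Hl] //=; rewrite nth_nseq; case: ifP => //; lia.
Qed.
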